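(* Let $n,r\ge 1$, ${\bf A}\in\mathbb{H}^n$, $g\in\mathcal{G}$, and ${\bf X}_0\in\mathbb{C}^{n\times r}$. Define $${\bf U}_1({\bf X})={\bf X}^{\mathrm H}{\bf A}^{(+)}{\bf X}+{\bf X}^{\mathrm H}{\bf A}^{(-)}{\bf X}_0+{\bf X}_0^{\mathrm H}{\bf A}^{(-)}{\bf X}-{\bf X}_0^{\mathrm H}{\bf A}^{(-)}{\bf X}_0,$$ $${\bf U}_2({\bf X})={\bf X}^{\mathrm H}{\bf A}^{(-)}{\bf X}+{\bf X}^{\mathrm H}{\bf A}^{(+)}{\bf X}_0+{\bf X}_0^{\mathrm H}{\bf A}^{(+)}{\bf X}-{\bf X}_0^{\mathrm H}{\bf A}^{(+)}{\bf X}_0,$$ and $u({\bf X};{\bf X}_0)=g({\bf U}_1({\bf X}))$ if $g$ is MND, $u({\bf X};{\bf X}_0)=g({\bf U}_2({\bf X}))$ if $g$ is MNI. Then: (i) $u(\cdot;{\bf X}_0)$ is convex on $\mathbb{C}^{n\times r}$ (viewed as a real vector space); (ii) $u({\bf X};{\bf X}_0)\ge g({\bf X}^{\mathrm H}{\bf A}{\bf X})$ for all ${\bf X}\in\mathbb{C}^{n\times r}$; (iii) $u({\bf X}_0;{\bf X}_0)=g({\bf X}_0^{\mathrm H}{\bf A}{\bf X}_0)$; (iv) the functions ${\bf X}\mapsto u({\bf X};{\bf X}_0)$ and ${\bf X}\mapsto g({\bf X}^{\mathrm H}{\bf A}{\bf X})$ have the same (real Fréchet) derivative at ${\bf X}={\bf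 X}_0$.
   Context: $\mathbb{H}^m$ denotes the real vector space of $m\times m$ complex Hermitian matrices, with inner product $\langle{\bf U},{\bf V}\rangle=\mathrm{tr}({\bf U}{\bf V})$; ${\bf U}\succeq{\bf V}$ means ${\bf U}-{\bf V}$ is positive semidefinite. For ${\bf A}\in\mathbb{H}^n$ with eigen-decomposition ${\bf A}=\sum_i\lambda_i{\bf u}_i{\bf u}_i^{\mathrm H}$ (orthonormal ${\bf u}_i$), ${\bf A}^{(+)}=\sum_{\lambda_i>0}\lambda_i{\bf u}_i{\bf u}_i^{\mathrm H}$ and ${\bf A}^{(-)}=\sum_{\lambda_i<0}\lambda_i{\bf u}_i{\bf u}_i^{\mathrm H}$, so ${\bf A}={\bf A}^{(+)}+{\bf A}^{(-)}$. A function $g:\mathbb{H}^r\to\mathbb{R}$ is MND (matrix nondecreasing) if ${\bf W}_1\succeq{\bf W}_2\Rightarrow g({\bf W}_1)\ge g({\bf W}_2)$, and MNI (matrix nonincreasing) if ${\bf W}_1\succeq{\bf W}_2\Rightarrow g({\bf W}_1)\le g({\bf W}_2)$. $\mathcal{G}$ is the family of differentiable convex functions $g:\mathbb{H}^r\to\mathbb{R}$ that are MND or MNI. *)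

(* Defs.v *)
From HB Require Import structures.
From mathcomp Require Import all_boot all_order all_algebra.
From mathcomp Require Import all_classical all_reals all_analysis.
From mathcomp Require Import complex.
Import numFieldNormedType.Exports.
Import Order.TTheory GRing.Theory Num.Theory.

Set Implicit Arguments.
Unset Strict Implicit.
Unset Printing Implicit Defensive.

Local Open Scope ring_scope.

Section Defs.
Variable R : realType.
Local Notation C := R[i].

Definition rC (t : R) : C := Complex t 0.

Definition adjH m k (X : 'M[C]_(m, k)) : 'M[C]_(k, m) := (map_mx (@conjc R) X)^T.

Definition is_herm m (M : 'M[C]_m) : Prop := adjH M = M.

Definition mx_psd m (M : 'M[C]_m) : Prop :=
  is_herm M /\ forall v : 'cV[C]_m, 0 <= (adjH v *m M *m v) 0 0.

Definition mx_ge m (W1 W2 : 'M[C]_m) : Prop := mx_psd (W1 - W2).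

(* g : H^r -> R is represented by a function on all r x r complex matrices;
   only its values on Hermitian matrices matter. *)
Definition MND r (g : 'M[C]_r -> R) : Prop :=
  forall W1 W2, is_herm W1 -> is_herm W2 -> mx_ge W1 W2 -> g W2 <= g W1.

Definition MNI r (g : 'M[C]_r -> R) : Prop :=
  forall W1 W2, is_herm W1 -> is_herm W2 -> mx_ge W1 W2 -> g W1 <= g W2.

Definition convex_on_herm r (g : 'M[C]_r -> R) : Prop :=
  forall W1 W2 (t : R), is_herm W1 -> is_herm W2 -> 0 <= t <= 1 ->
    g (rC t *: W1 + rC (1 - t) *: W2) <= t * g W1 + (1 - t) * g W2.

(* A real-linear isomorphism 'M[R]_r ~= H^r : a real matrix S is sent to the
   Hermitian matrix with real part (S + S^T)/2 and imaginary part (S - S^T)/2. *)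
Definition herm_of r (S : 'M[R]_r) : 'M[C]_r :=
  \matrix_(i, j) Complex ((S i j + S j i) / 2) ((S i j - S j i) / 2).

Definition differentiable_on_herm r (g : 'M[C]_r -> R) : Prop :=
  forall S : 'M[R]_r, differentiable (g \o (@herm_of r)) S.

Definition in_G r (g : 'M[C]_r -> R) : Prop :=
  differentiable_on_herm g /\ convex_on_herm g /\ (MND g \/ MNI g).

(* C^{n x r} as a real vector space: (Re X, Im X) |-> X *)
Definition cmx n r (p : ('M[R]_(n, r) * 'M[R]_(n, r))%type) : 'M[C]_(n, r) :=
  \matrix_(i, j) Complex (p.1 i j) (p.2 i j).

(* A^(+) and A^(-) computed from an eigendecomposition
   A = \sum_i lam_i u_i u_i^H, u_i = i-th column of the unitary U *)
Definition posPart n (U : 'M[C]_n) (lam : 'I_n -> R) : 'M[C]_n :=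
  \sum_(i < n | 0 < lam i) rC (lam i) *: (col i U *m adjH (col i U)).

Definition negPart n (U : 'M[C]_n) (lam : 'I_n -> R) : 'M[C]_n :=
  \sum_(i < n | lam i < 0) rC (lam i) *: (col i U *m adjH (col i U)).

Definition U1 n r (Ap Am : 'M[C]_n) (X0 X : 'M[C]_(n, r)) : 'M[C]_r :=
  adjH X *m Ap *m X + adjH X *m Am *m X0 + adjH X0 *m Am *m X
  - adjH X0 *m Am *m X0.

Definition U2 n r (Ap Am : 'M[C]_n) (X0 X : 'M[C]_(n, r)) : 'M[C]_r :=
  adjH X *m Am *m X + adjH X *m Ap *m X0 + adjH X0 *m Ap *m X
  - adjH X0 *m Ap *m X0.

End Defs.

(* Main.v *)
Require Import Defs.
From HB Require Import structures.
From mathcomp Require Import all_boot all_order all_algebra.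
From mathcomp Require Import all_classical all_reals all_analysis.
From mathcomp Require Import complex.
From mathcomp Require Import ring lra.
Import numFieldNormedType.Exports.
Import Order.TTheory GRing.Theory Num.Theory.
Set Implicit Arguments.
Unset Strict Implicit.
Unset Printing Implicit Defensive.
Local Open Scope ring_scope.

Section Alg.
Variable R : realType.
Local Notation C := R[i].

Lemma rCE (t : R) : rC t = (t%:C)%C. Proof. by []. Qed.
Lemma conj_rC (t : R) : conjc (rC t) = rC t.
Proof. by rewrite /rC /conjc oppr0. Qed.

Lemma adjHD m k (X Y : 'M[C]_(m,k)) : adjH (X + Y) = adjH X + adjH Y.
Proof. by rewrite /adjH !raddfD. Qed.
Lemma adjHN m k (X : 'M[C]_(m,k)) : adjH (- X) = - adjH X.
Proof. by rewrite /adjH !raddfN. Qed.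
Lemma adjHB m k (X Y : 'M[C]_(m,k)) : adjH (X - Y) = adjH X - adjH Y.
Proof. by rewrite adjHD adjHN. Qed.
Lemma adjHZ m k (t : R) (X : 'M[C]_(m,k)) : adjH (rC t *: X) = rC t *: adjH X.
Proof.
apply/matrixP => i j; rewrite !mxE /=.
by rewrite rmorphM /= oppr0.
Qed.
Lemma adjHM m k l (X : 'M[C]_(m,k)) (Y : 'M[C]_(k,l)) :
  adjH (X *m Y) = adjH Y *m adjH X.
Proof. by rewrite /adjH map_mxM trmx_mul. Qed.
Lemma adjHK m k (X : 'M[C]_(m,k)) : adjH (adjH X) = X.
Proof. by apply/matrixP => i j; rewrite !mxE conjcK. Qed.
Lemma adjH0 m k : adjH (0 : 'M[C]_(m,k)) = 0.
Proof. by apply/matrixP => i j; rewrite !mxE conjc0. Qed.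
Lemma adjH_sum m k I (r : seq I) (P : pred I) (F : I -> 'M[C]_(m,k)) :
  adjH (\sum_(i <- r | P i) F i) = \sum_(i <- r | P i) adjH (F i).
Proof. by rewrite /adjH !raddf_sum. Qed.


Definition qf n (M : 'M[C]_n) (v : 'cV[C]_n) : C := (adjH v *m M *m v) 0 0.

Lemma qf_sum n I (r : seq I) (P : pred I) (F : I -> 'M[C]_n) (v : 'cV[C]_n) :
  qf (\sum_(i <- r | P i) F i)%R v = (\sum_(i <- r | P i) qf (F i) v)%R.
Proof.
rewrite /qf mulmx_sumr mulmx_suml summxE; apply: eq_bigr => i _ //.
Qed.

Lemma qf_rank1 n (c : R) (u v : 'cV[C]_n) :
  qf (rC c *: (u *m adjH u)) v =
  rC c * (((adjH u *m v) 0 0)^*%C * (adjH u *m v) 0 0).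
Proof.
rewrite /qf -scalemxAr -scalemxAl mxE; congr (_ * _).
have -> : adjH v *m (u *m adjH u) *m v = adjH (adjH u *m v) *m (adjH u *m v).
  by rewrite adjHM adjHK !mulmxA.
by rewrite !mxE big_ord1 !mxE.
Qed.

Lemma sq_ge0 (s : C) : 0 <= s^*%C * s.
Proof. by rewrite mulrC mulcJ_ge0. Qed.

Lemma rC_ge0 (c : R) : (0 <= rC c) = (0 <= c).
Proof. by rewrite lecE /= eqxx. Qed.
Lemma rC_le0 (c : R) : (rC c <= 0) = (c <= 0).
Proof. by rewrite lecE /= eqxx. Qed.

Lemma qf_pos n (U : 'M[C]_n) (lam : 'I_n -> R) v : 0 <= qf (posPart U lam) v.
Proof.
rewrite /posPart qf_sum; apply: sumr_ge0 => i /ltW hi.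
by rewrite qf_rank1 mulr_ge0 ?sq_ge0 ?rC_ge0.
Qed.

Lemma qf_neg n (U : 'M[C]_n) (lam : 'I_n -> R) v : qf (negPart U lam) v <= 0.
Proof.
rewrite /negPart qf_sum; apply: sumr_le0 => i /ltW hi.
by rewrite qf_rank1 mulr_le0_ge0 ?sq_ge0 ?rC_le0.
Qed.


Lemma rCM (a b : R) : rC (a * b) = rC a * rC b.
Proof. by apply/eqP; rewrite eq_complex /= !mulr0 !mul0r subr0 addr0 !eqxx. Qed.
Lemma rCB (a b : R) : rC (a - b) = rC a - rC b.
Proof. by apply/eqP; rewrite eq_complex /= subr0 !eqxx. Qed.
Lemma rC1 : rC 1 = 1 :> C. Proof. by []. Qed.

Fact Bq_key : unit. Proof. by []. Qed.
Definition Bq n r (M : 'M[C]_n) (X Y : 'M[C]_(n,r)) : 'M[C]_r :=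
  locked_with Bq_key (adjH X *m M *m Y).
Lemma BqE n r (M : 'M[C]_n) (X Y : 'M[C]_(n,r)) : Bq M X Y = adjH X *m M *m Y.
Proof. by rewrite /Bq unlock. Qed.

Section BqLemmas.
Variables (n r : nat) (M N : 'M[C]_n).
Implicit Types X Y Z : 'M[C]_(n,r).
Lemma BqDl X Y Z : Bq M (X + Y) Z = Bq M X Z + Bq M Y Z.
Proof. by rewrite !BqE adjHD !mulmxDl. Qed.
Lemma BqDr X Y Z : Bq M Z (X + Y) = Bq M Z X + Bq M Z Y.
Proof. by rewrite !BqE mulmxDr. Qed.
Lemma BqNl X Z : Bq M (- X) Z = - Bq M X Z.
Proof. by rewrite !BqE adjHN !mulNmx. Qed.
Lemma BqNr X Z : Bq M Z (- X) = - Bq M Z X.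
Proof. by rewrite !BqE mulmxN. Qed.
Lemma BqBl X Y Z : Bq M (X - Y) Z = Bq M X Z - Bq M Y Z.
Proof. by rewrite BqDl BqNl. Qed.
Lemma BqBr X Y Z : Bq M Z (X - Y) = Bq M Z X - Bq M Z Y.
Proof. by rewrite BqDr BqNr. Qed.
Lemma BqZl (t : R) X Z : Bq M (rC t *: X) Z = rC t *: Bq M X Z.
Proof. by rewrite !BqE adjHZ -!scalemxAl. Qed.
Lemma BqZr (t : R) X Z : Bq M Z (rC t *: X) = rC t *: Bq M Z X.
Proof. by rewrite !BqE -!scalemxAr. Qed.
Lemma BqDM X Y : Bq (M + N) X Y = Bq M X Y + Bq N X Y.
Proof. by rewrite !BqE mulmxDr mulmxDl. Qed.
Lemma adjH_Bq X Y : adjH (Bq M X Y) = Bq (adjH M) Y X.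
Proof. by rewrite !BqE !adjHM adjHK mulmxA. Qed.
Lemma Bq_qf X (v : 'cV[C]_r) : qf (Bq M X X) v = qf M (X *m v).
Proof. by rewrite /qf BqE adjHM !mulmxA. Qed.
End BqLemmas.

Ltac genBq := repeat match goal with |- context[Bq ?M ?X ?Y] => generalize (Bq M X Y); intro end.

Lemma U1E n r (P N : 'M[C]_n) (X0 X : 'M[C]_(n,r)) :
  U1 P N X0 X = Bq P X X + Bq N X X0 + Bq N X0 X - Bq N X0 X0.
Proof. by rewrite /U1 !BqE. Qed.

Lemma U1_maj n r (P N : 'M[C]_n) (X0 X : 'M[C]_(n,r)) :
  U1 P N X0 X - Bq (P + N) X X = - Bq N (X - X0) (X - X0).
Proof.
rewrite U1E BqDM !(BqBl, BqBr).
genBq; apply/matrixP => i j; rewrite !mxE; ring.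
Qed.

Lemma conv_abs (K : comRingType) (c pxx nxx0 nx0x nx0x0 pyy nyx0 nx0y pxy pyx : K) :
 c * (pxx + nxx0 + nx0x - nx0x0) +
 (1 - c) * (pyy + nyx0 + nx0y - nx0x0) -
 (c * (c * pxx + (1 - c) * pxy) +
  (1 - c) * (c * pyx + (1 - c) * pyy) +
  (c * nxx0 + (1 - c) * nyx0) +
  (c * nx0x + (1 - c) * nx0y) - nx0x0) =
 c * (1 - c) * (pxx - pxy - (pyx - pyy)).
Proof. ring. Qed.

Lemma U1_conv n r (P N : 'M[C]_n) (X0 X Y : 'M[C]_(n,r)) (t : R) :
  rC t *: U1 P N X0 X + rC (1 - t) *: U1 P N X0 Y
  - U1 P N X0 (rC t *: X + rC (1 - t) *: Y)
  = rC (t * (1 - t)) *: Bq P (X - Y) (X - Y).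
Proof.
rewrite !U1E !(BqBl, BqBr, BqDl, BqDr, BqZl, BqZr) rCM rCB rC1.
genBq; apply/matrixP => i j; rewrite !mxE; ring.
Qed.


Lemma qfD n (M N : 'M[C]_n) v : qf (M + N) v = qf M v + qf N v.
Proof. by rewrite /qf mulmxDr mulmxDl mxE. Qed.
Lemma qfN n (M : 'M[C]_n) v : qf (- M) v = - qf M v.
Proof. by rewrite /qf mulmxN mulNmx mxE. Qed.
Lemma qfZ n (c : R) (M : 'M[C]_n) v : qf (rC c *: M) v = rC c * qf M v.
Proof. by rewrite /qf -scalemxAr -scalemxAl mxE. Qed.

Lemma herm_rank1 n (U : 'M[C]_n) (lam : 'I_n -> R) (P : pred 'I_n) :
  is_herm (\sum_(i < n | P i) rC (lam i) *: (col i U *m adjH (col i U))).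
Proof.
rewrite /is_herm adjH_sum; apply: eq_bigr => i _.
by rewrite adjHZ adjHM adjHK.
Qed.

Lemma herm_pos n (U : 'M[C]_n) lam : is_herm (posPart U lam).
Proof. exact: herm_rank1. Qed.
Lemma herm_neg n (U : 'M[C]_n) lam : is_herm (negPart U lam).
Proof. exact: herm_rank1. Qed.

Lemma A_split n (U : 'M[C]_n) (lam : 'I_n -> R) :
  \sum_(i < n) rC (lam i) *: (col i U *m adjH (col i U))
  = posPart U lam + negPart U lam.
Proof.
rewrite /posPart /negPart (bigID (fun i => 0 < lam i)) /=; congr (_ + _).
rewrite (bigID (fun i => lam i < 0)) /= [X in _ + X]big1 ?addr0.
  by apply: eq_bigl => i; case: ltrgtP.
move=> i /andP[h1 h2].
have -> : lam i = 0 by apply/eqP; rewrite eq_le !leNgt h1 h2.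
by rewrite /rC scale0r.
Qed.

Lemma herm_Bq n r (M : 'M[C]_n) (X Y : 'M[C]_(n,r)) :
  is_herm M -> adjH (Bq M X Y) = Bq M Y X.
Proof. by move=> hM; rewrite adjH_Bq hM. Qed.

Lemma herm_U1 n r (P N : 'M[C]_n) (X0 X : 'M[C]_(n,r)) :
  is_herm P -> is_herm N -> is_herm (U1 P N X0 X).
Proof.
move=> hP hN; rewrite /is_herm U1E !(adjHD, adjHB, adjHN) !herm_Bq //.
genBq; apply/matrixP => i j; rewrite !mxE; ring.
Qed.

Lemma herm_comb r (t : R) (W1 W2 : 'M[C]_r) :
  is_herm W1 -> is_herm W2 -> is_herm (rC t *: W1 + rC (1 - t) *: W2).
Proof. by rewrite /is_herm => h1 h2; rewrite adjHD !adjHZ h1 h2. Qed.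

Lemma herm_B r (W1 W2 : 'M[C]_r) :
  is_herm W1 -> is_herm W2 -> is_herm (W1 - W2).
Proof. by rewrite /is_herm => h1 h2; rewrite adjHB h1 h2. Qed.

Lemma Bq00 n r (M : 'M[C]_n) : Bq M (0 : 'M[C]_(n,r)) 0 = 0.
Proof. by rewrite BqE adjH0 !mul0mx. Qed.

Section Core.
Variables (n r : nat) (g : 'M[C]_r -> R) (P N A : 'M[C]_n) (X0 : 'M[C]_(n,r)).
Hypotheses (hg : convex_on_herm g) (hP : is_herm P) (hN : is_herm N)
  (hA : A = P + N).

Lemma hermA : is_herm A.
Proof. by rewrite /is_herm hA adjHD hP hN. Qed.

Lemma hU (X : 'M[C]_(n,r)) : is_herm (U1 P N X0 X).
Proof. exact: herm_U1. Qed.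

Lemma hBqA (X : 'M[C]_(n,r)) : is_herm (Bq A X X).
Proof. by rewrite /is_herm (herm_Bq _ _ hermA). Qed.

Lemma core_tight : g (U1 P N X0 X0) = g (Bq A X0 X0).
Proof.
congr g; apply/eqP; rewrite -subr_eq0 hA U1_maj subrr Bq00.
by rewrite oppr0.
Qed.

Lemma core_MND : MND g -> (forall v, 0 <= qf P v) -> (forall v, qf N v <= 0) ->
  (forall (X Y : 'M[C]_(n,r)) (t : R), 0 <= t <= 1 ->
     g (U1 P N X0 (rC t *: X + rC (1 - t) *: Y))
       <= t * g (U1 P N X0 X) + (1 - t) * g (U1 P N X0 Y))
  /\ (forall X, g (Bq A X X) <= g (U1 P N X0 X)).
Proof.
move=> hm hPp hNn; split.
  move=> X Y t ht; have /andP[t0 t1] := ht.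
  have hc := hg (hU X) (hU Y) ht.
  apply: le_trans hc.
  have hV := herm_comb t (hU X) (hU Y).
  apply: (hm _ _ hV (hU _)).
  split; first exact: herm_B hV (hU _).
  move=> v; rewrite -/(qf _ v) U1_conv qfZ Bq_qf mulr_ge0 ?hPp // rC_ge0.
  by rewrite mulr_ge0 // subr_ge0.
move=> X; apply: (hm _ _ (hU X) (hBqA X)).
split; first exact: herm_B (hU X) (hBqA X).
by move=> v; rewrite -/(qf _ v) hA U1_maj qfN Bq_qf oppr_ge0.
Qed.

Lemma core_MNI : MNI g -> (forall v, qf P v <= 0) -> (forall v, 0 <= qf N v) ->
  (forall (X Y : 'M[C]_(n,r)) (t : R), 0 <= t <= 1 ->
     g (U1 P N X0 (rC t *: X + rC (1 - t) *: Y))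
       <= t * g (U1 P N X0 X) + (1 - t) * g (U1 P N X0 Y))
  /\ (forall X, g (Bq A X X) <= g (U1 P N X0 X)).
Proof.
move=> hm hPp hNn; split.
  move=> X Y t ht; have /andP[t0 t1] := ht.
  have hc := hg (hU X) (hU Y) ht.
  apply: le_trans hc.
  have hV := herm_comb t (hU X) (hU Y).
  apply: (hm _ _ (hU _) hV).
  split; first exact: herm_B (hU _) hV.
  move=> v; rewrite -/(qf _ v) -opprB U1_conv qfN qfZ Bq_qf oppr_ge0.
  rewrite mulr_ge0_le0 ?hPp // rC_ge0.
  by rewrite mulr_ge0 // subr_ge0.
move=> X; apply: (hm _ _ (hBqA X) (hU X)).
split; first exact: herm_B (hBqA X) (hU X).
by move=> v; rewrite -/(qf _ v) -opprB hA U1_maj opprK Bq_qf.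
Qed.
End Core.

End Alg.

Section An.
Variable R : realType.

Lemma cont_sum {T : topologicalType} {W : normedModType R} (I : finType)
  (F : I -> T -> W) x :
  (forall i, {for x, continuous (F i)}) ->
  {for x, continuous (fun y => \sum_i F i y)}.
Proof.
move=> h; rewrite (_ : (fun y => _) = \sum_i F i); last first.
  by apply/funext => y; rewrite fct_sumE.
elim/big_ind: _ => //.
- exact: cvg_cst.
- by move=> f g hf hg; apply: continuousD.
Qed.

Variables (n r : nat).
Local Notation Pt := ('M[R]_(n,r) * 'M[R]_(n,r))%type.

Lemma cont_c1 i j : continuous (fun p : Pt => p.1 i j).
Proof.
move=> p; apply: (@continuous_comp _ _ _ fst (fun M : 'M[R]_(n,r) => M i j)).
  exact: cvg_fst.
exact: coord_continuous.
Qed.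
Lemma cont_c2 i j : continuous (fun p : Pt => p.2 i j).
Proof.
move=> p; apply: (@continuous_comp _ _ _ snd (fun M : 'M[R]_(n,r) => M i j)).
  exact: cvg_snd.
exact: coord_continuous.
Qed.

Lemma Pt_decomp (p : Pt) : p = \sum_(ij : 'I_n * 'I_r)
  (p.1 ij.1 ij.2 *: (delta_mx ij.1 ij.2, 0) + p.2 ij.1 ij.2 *: (0, delta_mx ij.1 ij.2)).
Proof.
have h1 : forall (F : 'I_n * 'I_r -> Pt), (\sum_ij F ij).1 = \sum_ij (F ij).1.
  by move=> F; apply: (big_morph fst) => //.
have h2 : forall (F : 'I_n * 'I_r -> Pt), (\sum_ij F ij).2 = \sum_ij (F ij).2.
  by move=> F; apply: (big_morph snd) => //.
case: p => P Q; rewrite [RHS]surjective_pairing; congr (_, _).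
  rewrite h1 /= [LHS]matrix_sum_delta pair_bigA /=.
  by apply: eq_bigr => -[i j] _ /=; rewrite scaler0 addr0.
rewrite h2 /= [LHS]matrix_sum_delta pair_bigA /=.
by apply: eq_bigr => -[i j] _ /=; rewrite scaler0 add0r.
Qed.


Lemma lin_decomp {W : normedModType R} (L : Pt -> W) :
  (forall a p q, L (a *: p + q) = a *: L p + L q) ->
  forall p, L p = \sum_(ij : 'I_n * 'I_r)
  (p.1 ij.1 ij.2 *: L (delta_mx ij.1 ij.2, 0) + p.2 ij.1 ij.2 *: L (0, delta_mx ij.1 ij.2)).
Proof.
move=> hL p.
pose lM := GRing.isLinear.Build _ _ _ _ L hL.
pose LL : {linear Pt -> W} := HB.pack L lM.
rewrite {1}(Pt_decomp p); change L with (LL : Pt -> W).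
by rewrite linear_sum; apply: eq_bigr => ij _; rewrite linearD !linearZ.
Qed.

Lemma lin_cont {W : normedModType R} (L : Pt -> W) :
  (forall a p q, L (a *: p + q) = a *: L p + L q) -> continuous L.
Proof.
move=> hL; rewrite (_ : L = fun p => \sum_(ij : 'I_n * 'I_r)
  (p.1 ij.1 ij.2 *: L (delta_mx ij.1 ij.2, 0) + p.2 ij.1 ij.2 *: L (0, delta_mx ij.1 ij.2))).
  move=> p; apply: cont_sum => ij; apply: continuousD; apply: continuousZr_tmp.
    exact: cont_c1.
  exact: cont_c2.
by apply/funext => p; apply: lin_decomp.
Qed.

Lemma bilin_cont {W : normedModType R} (B : Pt -> Pt -> W) :
  (forall a p q z, B (a *: p + q) z = a *: B p z + B q z) ->
  (forall a p q z, B z (a *: p + q) = a *: B z p + B z q) ->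
  continuous (fun pq : Pt * Pt => B pq.1 pq.2).
Proof.
move=> hl hr.
rewrite (_ : (fun pq : Pt * Pt => B pq.1 pq.2) = fun pq => \sum_(ij : 'I_n * 'I_r)
  (pq.1.1 ij.1 ij.2 *: B (delta_mx ij.1 ij.2, 0) pq.2
   + pq.1.2 ij.1 ij.2 *: B (0, delta_mx ij.1 ij.2) pq.2)).
  move=> x; apply: cont_sum => ij; apply: continuousD; apply: continuousZ.
  - apply: (@continuous_comp _ _ _ fst (fun p : Pt => p.1 ij.1 ij.2)).
      exact: cvg_fst.
    exact: cont_c1.
  - apply: (@continuous_comp _ _ _ snd (B (delta_mx ij.1 ij.2, 0))).
      exact: cvg_snd.
    by apply: lin_cont => a p q; apply: hr.
  - apply: (@continuous_comp _ _ _ fst (fun p : Pt => p.2 ij.1 ij.2)).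
      exact: cvg_fst.
    exact: cont_c2.
  - apply: (@continuous_comp _ _ _ snd (B (0, delta_mx ij.1 ij.2))).
      exact: cvg_snd.
    by apply: lin_cont => a p q; apply: hr.
apply/funext => pq; exact: (lin_decomp (L := B ^~ pq.2)).
Qed.


Lemma quad_diff {W : normedModType R} (B : Pt -> Pt -> W) :
  (forall a p q z, B (a *: p + q) z = a *: B p z + B q z) ->
  (forall a p q z, B z (a *: p + q) = a *: B z p + B z q) ->
  forall p, differentiable (fun x => B x x) p /\
   'd (fun x => B x x) p = (fun h => B p h + B h p) :> (Pt -> W).
Proof.
move=> hl hr p.
have hb : bilinear_for (GRing.Scale.Law.clone _ _ *:%R _)
    (GRing.Scale.Law.clone _ _ *:%R _) B.
  by split => [u'|u] a x y /=; [exact: hl|exact: hr].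
pose bM := bilinear_isBilinear.Build R Pt Pt W _ _ B hb.
pose BB : {bilinear Pt -> Pt -> W} := HB.pack B bM.
have hc : continuous (fun pq : Pt * Pt => BB pq.1 pq.2) by exact: bilin_cont.
have dl : linear (fun x : Pt => (x, x)) by [].
pose dM := GRing.isLinear.Build _ _ _ _ _ dl.
pose DD : {linear Pt -> (Pt * Pt)%type} := HB.pack (fun x : Pt => (x, x)) dM.
have dc : continuous DD.
  move=> x; have := @cvg_pair _ _ _ _ _ _ _ _ _ (fun y : Pt => y) (fun y : Pt => y) (@cvg_id _ (nbhs x)) (@cvg_id _ (nbhs x)). exact.
have -> : (fun x => B x x) = (fun q : Pt * Pt => BB q.1 q.2) \o DD by [].
have dD : differentiable DD p by exact: linear_differentiable.
have dB : differentiable (fun q : Pt * Pt => BB q.1 q.2) (DD p).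
  exact: differentiable_bilin.
split; first exact: differentiable_comp.
rewrite diff_comp // diff_bilin // diff_lin //.
Qed.

End An.

Section Spec.
Variable R : realType.
Local Notation C := R[i].

Definition toR r (M : 'M[C]_r) : 'M[R]_r :=
  map_mx (fun z : C => complex.Re z + complex.Im z) M.

Lemma herm_ofK r (M : 'M[C]_r) : is_herm M -> herm_of (toR M) = M.
Proof.
move=> h; apply/matrixP => i j; rewrite !mxE.
have -> : M j i = conjc (M i j) by rewrite -{1}h !mxE.
case: (M i j) => a b /=.
by congr Complex; field.
Qed.

Variables (n r : nat).
Local Notation Pt := ('M[R]_(n,r) * 'M[R]_(n,r))%type.

Lemma cmx_lin a (p q : Pt) : cmx (a *: p + q) = rC a *: cmx p + cmx q.
Proof.
apply/matrixP => i j; rewrite !mxE /=.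
by apply/eqP; rewrite eq_complex /= !mul0r subr0 addr0 !eqxx.
Qed.

Lemma cmxB (p q : Pt) : cmx (p - q) = cmx p - cmx q.
Proof. by apply/matrixP => i j; rewrite !mxE. Qed.

Lemma toR_lin (a : R) (M N : 'M[C]_r) : toR (rC a *: M + N) = a *: toR M + toR N.
Proof.
apply/matrixP => i j; rewrite !mxE /=.
case: (M i j) => x y; case: (N i j) => z w /=; ring.
Qed.

Lemma toRB (M N : 'M[C]_r) : toR (M - N) = toR M - toR N.
Proof.
apply/matrixP => i j; rewrite !mxE /=.
case: (M i j) => x y; case: (N i j) => z w /=; ring.
Qed.

Definition BR (M : 'M[C]_n) (p q : Pt) : 'M[R]_r := toR (Bq M (cmx p) (cmx q)).

Lemma BR_l M a (p q z : Pt) : BR M (a *: p + q) z = a *: BR M p z + BR M q z.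
Proof. by rewrite /BR cmx_lin BqDl BqZl toR_lin. Qed.
Lemma BR_r M a (p q z : Pt) : BR M z (a *: p + q) = a *: BR M z p + BR M z q.
Proof. by rewrite /BR cmx_lin BqDr BqZr toR_lin. Qed.

Lemma BR0 M (z : Pt) : BR M 0 z = 0.
Proof.
have h := BR_l M 1 0 0 z; rewrite !scale1r addr0 in h.
by apply: (@addrI _ (BR M 0 z)); rewrite addr0 -h.
Qed.

Lemma BR0r M (z : Pt) : BR M z 0 = 0.
Proof.
have h := BR_r M 1 0 0 z; rewrite !scale1r addr0 in h.
by apply: (@addrI _ (BR M z 0)); rewrite addr0 -h.
Qed.


End Spec.

Section Spec2.
Variable R : realType.
Local Notation C := R[i].
Variables (n r : nat).
Local Notation Pt := ('M[R]_(n,r) * 'M[R]_(n,r))%type.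

Fact Qf_key : unit. Proof. by []. Qed.
Definition Qf (M : 'M[C]_n) : Pt -> 'M[R]_r := locked_with Qf_key (fun p => BR M p p).
Lemma QfE M p : Qf M p = BR M p p. Proof. by rewrite /Qf unlock. Qed.
Fact Kf_key : unit. Proof. by []. Qed.
Definition Kf (M : 'M[C]_n) (p0 : Pt) : Pt -> 'M[R]_r :=
  locked_with Kf_key (Qf M \o (fun p => p - p0)).
Lemma KfE M p0 : Kf M p0 = Qf M \o (fun p => p - p0). Proof. by rewrite /Kf unlock. Qed.

Lemma Qf_diff M p : differentiable (Qf M) p /\
  ('d (Qf M) p : Pt -> 'M[R]_r) = (fun h => BR M p h + BR M h p).
Proof.
have -> : Qf M = (fun p => BR M p p) by apply/funext => q; rewrite QfE.
exact: (quad_diff (@BR_l R n r M) (@BR_r R n r M) p).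
Qed.

Lemma Kf_diff M p0 : differentiable (Kf M p0) p0 /\
  ('d (Kf M p0) p0 : Pt -> 'M[R]_r) = 0.
Proof.
have dsh : differentiable (fun p : Pt => p - p0) p0.
  by apply: differentiableB; [exact: ex_diff|exact: differentiable_cst].
have [dQ dQE] := Qf_diff M (p0 - p0).
rewrite KfE.
split; first exact: (differentiable_comp dsh dQ).
rewrite (diff_comp dsh dQ) dQE subrr; apply/funext => h /=.
by rewrite BR0 BR0r addr0.
Qed.

Lemma GK_diff M N p0 : differentiable (Qf M - Kf N p0) p0 /\
  ('d (Qf M - Kf N p0) p0 : Pt -> 'M[R]_r) = 'd (Qf M) p0.
Proof.
have [dG _] := Qf_diff M p0.
have [dK dKE] := Kf_diff N p0.
split; first exact: (differentiableD dG (differentiableN dK)).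
have e : ('d (Qf M - Kf N p0) p0 : Pt -> 'M[R]_r) = 'd (Qf M) p0 \- 'd (Kf N p0) p0 := diffB dG dK.
apply: (etrans e).
apply/funext => h /=.
have e2 : 'd (Kf N p0) p0 h = 0 := congr1 (fun f => f h) dKE.
transitivity ('d (Qf M) p0 h - 0); last by rewrite subr0.
by congr (_ - _).
Qed.

Lemma comp_diff (gh : 'M[R]_r -> R) (hd : forall S, differentiable gh S)
  (F G : Pt -> 'M[R]_r) p0 : differentiable F p0 -> differentiable G p0 ->
  F p0 = G p0 -> ('d F p0 : Pt -> 'M[R]_r) = 'd G p0 ->
  differentiable (gh \o F) p0 /\ differentiable (gh \o G) p0 /\
  ('d (gh \o F) p0 : Pt -> R) = 'd (gh \o G) p0.
Proof.
move=> dF dG e1 e2; split; first exact: (differentiable_comp dF (hd _)).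
split; first exact: (differentiable_comp dG (hd _)).
apply: (etrans (diff_comp dF (hd _))).
apply: esym; apply: (etrans (diff_comp dG (hd _))).
exact: (f_equal2 (fun (a : 'M[R]_r -> R) (b : Pt -> 'M[R]_r) => a \o b)
  (congr1 (fun y => ('d gh y : 'M[R]_r -> R)) (esym e1)) (esym e2)).
Qed.

End Spec2.

Section Fin.
Variable R : realType.
Local Notation C := R[i].

Lemma main_gen (n r : nat) (g : 'M[C]_r -> R) (hg : in_G g) (P N A : 'M[C]_n)
  (hP : is_herm P) (hN : is_herm N) (hA : A = P + N) (X0 : 'M[C]_(n, r))
  (u : 'M[C]_(n, r) -> R) (hu : forall X, u X = g (U1 P N X0 X))
  (mono : (MND g /\ (forall v, 0 <= qf P v) /\ (forall v, qf N v <= 0))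
       \/ (MNI g /\ (forall v, qf P v <= 0) /\ (forall v, 0 <= qf N v))) :
  (forall (X Y : 'M[C]_(n, r)) (t : R), 0 <= t <= 1 ->
     u (rC t *: X + rC (1 - t) *: Y) <= t * u X + (1 - t) * u Y)
  /\ (forall X : 'M[C]_(n, r), g (adjH X *m A *m X) <= u X)
  /\ u X0 = g (adjH X0 *m A *m X0)
  /\ (forall p0 : ('M[R]_(n, r) * 'M[R]_(n, r))%type, cmx p0 = X0 ->
        differentiable (u \o (@cmx R n r)) p0
        /\ differentiable (fun p => g (adjH (cmx p) *m A *m cmx p)) p0
        /\ ('d (u \o (@cmx R n r)) p0 : _ -> R)
           = 'd (fun p => g (adjH (cmx p) *m A *m cmx p)) p0).
Proof.
have [hd [hc _]] := hg.
have [hconv hmaj] : (forall (X Y : 'M[C]_(n,r)) (t : R), 0 <= t <= 1 ->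
     g (U1 P N X0 (rC t *: X + rC (1 - t) *: Y))
       <= t * g (U1 P N X0 X) + (1 - t) * g (U1 P N X0 Y))
  /\ (forall X, g (Bq A X X) <= g (U1 P N X0 X)).
  case: mono => [[hm [h1 h2]]|[hm [h1 h2]]].
    exact: core_MND.
  exact: core_MNI.
split.
  by move=> X Y t ht; rewrite !hu; apply: hconv.
split.
  by move=> X; rewrite hu -BqE; apply: hmaj.
split.
  by rewrite hu -BqE; apply: core_tight.
move=> p0 hp0.
pose gh := g \o @herm_of R r.
have hermA : is_herm A by rewrite /is_herm hA adjHD hP hN.
have GKE : forall p, (Qf A - Kf N p0) p = Qf A p - Kf N p0 p by [].
have E1 : u \o (@cmx R n r) = gh \o (Qf A - Kf N p0).
  apply/funext => p; rewrite /gh /= hu GKE KfE /= !QfE /BR -toRB cmxB hp0.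
  have -> : Bq A (cmx p) (cmx p) - Bq N (cmx p - X0) (cmx p - X0)
            = U1 P N X0 (cmx p).
    by rewrite hA -(U1_maj P N X0 (cmx p)) addrC subrK.
  by rewrite herm_ofK //; exact: herm_U1.
have E2 : (fun p => g (adjH (cmx p) *m A *m cmx p)) = gh \o Qf A.
  apply/funext => p; rewrite /gh /= QfE /BR BqE herm_ofK //.
  by rewrite -BqE /is_herm herm_Bq.
rewrite E1 E2.
have [dG _] := Qf_diff A p0.
have [dF eF] := GK_diff A N p0.
have e1 : (Qf A - Kf N p0) p0 = Qf A p0.
  by rewrite GKE KfE /= subrr !QfE BR0 subr0.
exact: (@comp_diff R n r gh hd _ _ p0 dF dG e1 eF).
Qed.

End Fin.

Theorem theorem2 (R : realType) (n r : nat) (hn : (0 < n)%N) (hr : (0 < r)%N)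
  (A U : 'M[R[i]]_n) (lam : 'I_n -> R)
  (hAherm : is_herm A)
  (hU : adjH U *m U = 1%:M)
  (hA : A = \sum_(i < n) rC (lam i) *: (col i U *m adjH (col i U)))
  (g : 'M[R[i]]_r -> R) (hg : in_G g)
  (X0 : 'M[R[i]]_(n, r)) (u : 'M[R[i]]_(n, r) -> R)
  (hu : (MND g /\ forall X, u X = g (U1 (posPart U lam) (negPart U lam) X0 X))
     \/ (MNI g /\ forall X, u X = g (U2 (posPart U lam) (negPart U lam) X0 X))) :
  (* (i) convexity over the real vector space C^{n x r} *)
  (forall (X Y : 'M[R[i]]_(n, r)) (t : R), 0 <= t <= 1 ->
     u (rC t *: X + rC (1 - t) *: Y) <= t * u X + (1 - t) * u Y)
  (* (ii) majorization *)
  /\ (forall X : 'M[R[i]]_(n, r), g (adjH X *m A *m X) <= u X)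
  (* (iii) tightness at X0 *)
  /\ u X0 = g (adjH X0 *m A *m X0)
  (* (iv) same real Frechet derivative at X0 *)
  /\ (forall p0 : ('M[R]_(n, r) * 'M[R]_(n, r))%type, cmx p0 = X0 ->
        differentiable (u \o (@cmx R n r)) p0
        /\ differentiable (fun p => g (adjH (cmx p) *m A *m cmx p)) p0
        /\ ('d (u \o (@cmx R n r)) p0 : _ -> R)
           = 'd (fun p => g (adjH (cmx p) *m A *m cmx p)) p0).
Proof.
have hAs : A = posPart U lam + negPart U lam by rewrite hA A_split.
case: hu => [[hm hu1]|[hm hu2]].
  eapply main_gen.
  - exact: hg.
  - exact: herm_pos.
  - exact: herm_neg.
  - exact: hAs.
  - exact: hu1.
  - by left; split; [exact: hm|split; [exact: qf_pos|exact: qf_neg]].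
have hAs' : A = negPart U lam + posPart U lam by rewrite hAs addrC.
eapply main_gen.
- exact: hg.
- exact: herm_neg.
- exact: herm_pos.
- exact: hAs'.
- exact: hu2.
- by right; split; [exact: hm|split; [exact: qf_neg|exact: qf_pos]].
Qed.
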